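(* Let $N:\Sigma\to c(X)$ be a positive multimeasure (i.e. $0\in N(E)$ for every $E\in\Sigma$). Let $f,g:\Omega\to\mathbb R$ be measurable functions that are $BDS_m$-integrable with respect to $N$, let $a,b\ge 0$, and assume that $af+bg$ is also $BDS_m$-integrable with respect to $N$. Then for every $E\in\Sigma$ and every $x'\in X'$, $$ s\Big(x',\int_E (af+bg)\,dN\Big)\le a\, s\Big(x',\int_E f\,dN\Big)+b\, s\Big(x',\int_E g\,dN\Big), $$ equivalently $\int_E(af+bg)\,dN\subseteq \overline{a\int_E f\,dN+b\int_E g\,dN}$; i.e. the $BDS_m$-integral with respect to $N$ is a sublinear function of the integrand.
   Context: $(\Omega,\Sigma)$ is a measurable space and $X$ is a Hausdorff locally convex space with dual $X'$. $c(X)$ is the family of nonempty closed convex subsets of $X$. For $C\in c(X)$ and $x'\in X'$, the support function is $s(x',C)=\sup\{\langle x',x\rangle: x\in C\}\in(-\infty,+\infty]$. A multimeasure is a map $M:\Sigma\to c(X)$ such that for every $x'\in X'$ the set function $E\mapsto s(x',M(E))$ is a $\sigma$-finite countably additive measure with values in $(-\infty,+\infty]$. For a multimeasure $N$, $-N$ denotes $E\mapsto -N(E)=\{-x:x\in N(E)\}$, so $s(x',-N(E))=s(-x',N(E))$. $BDS_m$-integral: a measurable $f:\Omega\to\mathbb R$ is $BDS_m$-integrable with respect to $N$ (in $c(X)$) if for every $E\in\Sigma$ and $x'\in X'$ the expression $\int_E f^+\,ds(x',N)+\int_E f^-\,ds(x',-N)$ makes sense, and for every $E\in\Sigma$ there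 is $M_f(E)\in c(X)$ with $s(x',M_f(E))=\int_E f^+\,ds(x',N)+\int_E f^-\,ds(x',-N)$ for all $x'\in X'$; one writes $\int_E f\,dN:=M_f(E)$. (For $f\ge 0$ this reads $s(x',\int_E f\,dN)=\int_E f\,ds(x',N)$.) For sets $A,B$, $\overline{A+B}$ is the closure of the Minkowski sum. *)

(* Defs.v *)
From HB Require Import structures.
From mathcomp Require Import all_boot all_order all_algebra.
From mathcomp Require Import all_classical all_reals all_analysis.
From Stdlib Require Import ClassicalEpsilon.

Set Implicit Arguments.
Unset Strict Implicit.
Unset Printing Implicit Defensive.

Import Order.TTheory GRing.Theory Num.Theory.
Local Open Scope classical_set_scope.
Local Open Scope ring_scope.
Local Open Scope ereal_scope.

Section multimeasures.
Context {R : realType}.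

Definition dual_elt (X : tvsType R) (x' : X -> R) : Prop :=
  (forall (a : R) (u v : X), x' (a *: u + v) = a * x' u + x' v)%R
  /\ continuous (x' : X -> R^o).

Definition cc (X : tvsType R) (C : set X) : Prop :=
  C !=set0 /\ closed C /\ convex_set C.

Definition supp (X : tvsType R) (x' : X -> R) (C : set X) : \bar R :=
  ereal_sup [set (x' x)%:E | x in C].

Definition oppmm {T : Type} (X : tvsType R) (N : set T -> set X) :
  set T -> set X := fun E => [set (- x)%R | x in N E].

Context {d : measure_display} {T : measurableType d}.

Definition pinfty_signed_measure (nu : set T -> \bar R) : Prop :=
  nu set0 = 0
  /\ (forall E, measurable E -> -oo < nu E)
  /\ (forall F : (set T)^nat, (forall n, measurable (F n)) ->
        trivIset setT F ->
        (fun n => \sum_(0 <= i < n) nu (F i)) @ \oo --> nu (\bigcup_n F n))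
  /\ (exists F : (set T)^nat, (forall n, measurable (F n))
        /\ \bigcup_n F n = setT /\ (forall n, nu (F n) < +oo)).

Definition multimeasure (X : tvsType R) (M : set T -> set X) : Prop :=
  (forall E, measurable E -> cc (M E))
  /\ (forall x', dual_elt x' -> pinfty_signed_measure (fun E => supp x' (M E))).

Definition positive_mm (X : tvsType R) (N : set T -> set X) : Prop :=
  forall E, measurable E -> N E 0%R.

Definition pvar (nu : set T -> \bar R) (E : set T) : \bar R :=
  ereal_sup [set nu F | F in [set F | measurable F /\ F `<=` E]].
Definition nvar (nu : set T -> \bar R) (E : set T) : \bar R :=
  ereal_sup [set - nu F | F in [set F | measurable F /\ F `<=` E]].

Definition int_pos (nu : set T -> \bar R) (E : set T) (h : T -> R) : \bar R :=
  \int[pvar nu]_(x in E) (h x)%:E - \int[nvar nu]_(x in E) (h x)%:E.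

Definition int_pos_sense (nu : set T -> \bar R) (E : set T) (h : T -> R) : Prop :=
  ~ (\int[pvar nu]_(x in E) (h x)%:E = +oo /\ \int[nvar nu]_(x in E) (h x)%:E = +oo).

Definition posp (f : T -> R) : T -> R := fun w => Num.max (f w) 0%R.
Definition negp (f : T -> R) : T -> R := fun w => Num.max (- f w)%R 0%R.

Definition bds_expr (X : tvsType R) (N : set T -> set X) (f : T -> R)
  (E : set T) (x' : X -> R) : \bar R :=
  int_pos (fun A => supp x' (N A)) E (posp f)
  + int_pos (fun A => supp x' (oppmm N A)) E (negp f).

Definition bds_sense (X : tvsType R) (N : set T -> set X) (f : T -> R)
  (E : set T) (x' : X -> R) : Prop :=
  let I1 := int_pos (fun A => supp x' (N A)) E (posp f) in
  let I2 := int_pos (fun A => supp x' (oppmm N A)) E (negp f) in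
  [/\ int_pos_sense (fun A => supp x' (N A)) E (posp f),
      int_pos_sense (fun A => supp x' (oppmm N A)) E (negp f),
      ~ (I1 = +oo /\ I2 = -oo) & ~ (I1 = -oo /\ I2 = +oo)].

Definition bds_integrable (X : tvsType R) (N : set T -> set X) (f : T -> R) : Prop :=
  measurable_fun setT f
  /\ (forall E, measurable E -> forall x', dual_elt x' -> bds_sense N f E x')
  /\ (forall E, measurable E -> exists M : set X,
        cc M /\ forall x', dual_elt x' -> supp x' M = bds_expr N f E x').

Definition bds_integral (X : tvsType R) (N : set T -> set X) (f : T -> R)
  (E : set T) : set X :=
  epsilon (inhabits set0)
    (fun M => cc M /\ forall x', dual_elt x' -> supp x' M = bds_expr N f E x').

End multimeasures.

(* Main.v *)
Require Import Defs.
From HB Require Import structures.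
From mathcomp Require Import all_boot all_order all_algebra.
From mathcomp Require Import all_classical all_reals all_analysis.
From mathcomp Require Import measurable_realfun.
From Stdlib Require Import ClassicalEpsilon.

Import Order.TTheory GRing.Theory Num.Theory.
Local Open Scope classical_set_scope.
Local Open Scope ring_scope.

Section MK.
Context {R : realType} {d : measure_display} {T : measurableType d}
  (mu : set T -> \bar R) (h0 : mu set0 = 0%E) (hge0 : forall A, (0 <= mu A)%E)
  (hs : semi_sigma_additive mu).
Definition mkm : set T -> \bar R := let _ := (h0, hge0, hs) in mu.
HB.instance Definition _ := isMeasure.Build _ _ _ mkm h0 hge0 hs.
End MK.

Section helpers.
Context {R : realType} {d : measure_display} {T : measurableType d}.
Local Open Scope ereal_scope.

Section nu.
Context {nu : set T -> \bar R} (h0 : nu set0 = 0)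
  (hpos : forall A, measurable A -> 0 <= nu A) (hs : semi_sigma_additive nu).

Lemma pvar_eq A : measurable A -> pvar nu A = nu A.
Proof.
move=> mA; apply/eqP; rewrite eq_le; apply/andP; split.
- apply: ge_ereal_sup => _ [F [mF FA] <-].
  have h2 := semi_additiveW h0 (semi_sigma_additive_is_additive h0 hs).
  have mAF : measurable (A `\` F) by exact: measurableD.
  rewrite -(setDUK FA) h2 //; first by rewrite leeDl // hpos.
  + by rewrite setDUK.
  + by apply/seteqP; split => x // [Fx [_ nFx]].
- by apply: ereal_sup_ubound; exists A => //; split.
Qed.

Lemma pvar0 : pvar nu set0 = 0.
Proof. by rewrite pvar_eq. Qed.

Lemma pvar_ge0 A : 0 <= pvar nu A.
Proof.
rewrite -h0; apply: ereal_sup_ubound; exists set0 => //; split => //.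
Qed.

Lemma pvar_sigma : semi_sigma_additive (pvar nu).
Proof.
move=> F mF tF mU; rewrite pvar_eq //.
have -> : (fun n => \sum_(0 <= i < n) pvar nu (F i)) =
          (fun n => \sum_(0 <= i < n) nu (F i)).
  by apply: funext => n; apply: eq_bigr => i _; rewrite pvar_eq.
exact: hs.
Qed.

Lemma nvar_eq : nvar nu = mzero.
Proof.
apply: funext => A; apply/eqP; rewrite eq_le; apply/andP; split.
- apply: ge_ereal_sup => _ [F [mF FA] <-].
  by rewrite /mzero oppe_le0 hpos.
- rewrite /mzero; have : 0 = - nu set0 by rewrite h0 oppe0.
  move=> ->; apply: ereal_sup_ubound; exists set0 => //; split => //.
Qed.

Lemma int_pos_eq E h : int_pos nu E h =
  \int[mkm (pvar nu) pvar0 pvar_ge0 pvar_sigma]_(x in E) (h x)%:E.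
Proof.
by rewrite /int_pos nvar_eq integral_measure_zero sube0.
Qed.

End nu.
End helpers.

Section key.
Context {R : realType} {d : measure_display} {T : measurableType d}.
Local Open Scope ereal_scope.

Lemma mposp E (mE : measurable E) (F : T -> R) : measurable_fun setT F ->
  measurable_fun E (EFin \o posp F).
Proof.
move=> mF; apply/measurable_EFinP.
have -> : posp F = F \max cst 0%R by [].
apply: measurable_maxr; last exact: measurable_cst.
exact: measurable_funS mF.
Qed.

Lemma mnegp E (mE : measurable E) (F : T -> R) : measurable_fun setT F ->
  measurable_fun E (EFin \o negp F).
Proof.
move=> mF; apply/measurable_EFinP.
have -> : negp F = ((\- F) \max cst 0)%R by [].
apply: measurable_maxr; last exact: measurable_cst.
apply: measurable_funN; exact: measurable_funS mF.
Qed.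

Lemma posp_ge0 (F : T -> R) x : (0 <= posp F x)%R.
Proof. by rewrite /posp le_max lexx orbT. Qed.

Lemma negp_ge0 (F : T -> R) x : (0 <= negp F x)%R.
Proof. by rewrite /negp le_max lexx orbT. Qed.

Lemma lin2 (mu : {measure set T -> \bar R}) E (mE : measurable E)
  (u v : T -> R) (a b : R) (ha : (0 <= a)%R) (hb : (0 <= b)%R)
  (u0 : forall x, (0 <= u x)%R) (v0 : forall x, (0 <= v x)%R)
  (mu_ : measurable_fun E (EFin \o u))
  (mv : measurable_fun E (EFin \o v)) :
  \int[mu]_(x in E) ((a * u x + b * v x)%R)%:E =
  a%:E * \int[mu]_(x in E) (u x)%:E + b%:E * \int[mu]_(x in E) (v x)%:E.
Proof.
rewrite (eq_integral (fun x => a%:E * (u x)%:E + b%:E * (v x)%:E)); last first.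
  by move=> x _; rewrite EFinD !EFinM.
rewrite ge0_integralD //.
- by rewrite !ge0_integralZl // => x _; rewrite lee_fin.
- by move=> x _; rewrite -EFinM lee_fin mulr_ge0.
- exact: measurable_funeM.
- by move=> x _; rewrite -EFinM lee_fin mulr_ge0.
- exact: measurable_funeM.
Qed.

Lemma key (mu1 mu2 : {measure set T -> \bar R}) E (mE : measurable E)
  (f g : T -> R) (a b : R) (ha : (0 <= a)%R) (hb : (0 <= b)%R)
  (mf : measurable_fun setT f) (mg : measurable_fun setT g)
  (mh : measurable_fun setT (fun w => a * f w + b * g w)%R) :
  \int[mu1]_(x in E) (posp (fun w => a * f w + b * g w)%R x)%:E
  + \int[mu2]_(x in E) (negp (fun w => a * f w + b * g w)%R x)%:E
  <= a%:E * (\int[mu1]_(x in E) (posp f x)%:E + \int[mu2]_(x in E) (negp f x)%:E)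
   + b%:E * (\int[mu1]_(x in E) (posp g x)%:E + \int[mu2]_(x in E) (negp g x)%:E).
Proof.
have pf (mu : {measure set T -> \bar R}) (F : T -> R) :
    0 <= \int[mu]_(x in E) (posp F x)%:E.
  by apply: integral_ge0 => x _; rewrite lee_fin posp_ge0.
have nf (mu : {measure set T -> \bar R}) (F : T -> R) :
    0 <= \int[mu]_(x in E) (negp F x)%:E.
  by apply: integral_ge0 => x _; rewrite lee_fin negp_ge0.
rewrite (ge0_muleDr a%:E (pf mu1 f) (nf mu2 f)) (ge0_muleDr b%:E (pf mu1 g) (nf mu2 g)).
set A1 := \int[mu1]_(x in E) (posp f x)%:E.
set A2 := \int[mu2]_(x in E) (negp f x)%:E.
set B1 := \int[mu1]_(x in E) (posp g x)%:E.
set B2 := \int[mu2]_(x in E) (negp g x)%:E.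
set H1 := \int[mu1]_(x in E) _.
set H2 := \int[mu2]_(x in E) _.
rewrite (addeACA (a%:E * A1)); apply: leeD; rewrite /H1 /H2 /A1 /A2 /B1 /B2.
- rewrite -lin2 //; [|exact: posp_ge0|exact: posp_ge0|exact: mposp|exact: mposp].
  apply: ge0_le_integral => //.
  + by move=> x _; rewrite lee_fin posp_ge0.
  + exact: mposp.
  + apply/measurable_EFinP; apply: measurable_funD; apply: measurable_funM;
      (try exact: measurable_cst); apply/measurable_EFinP; exact: mposp.
  + move=> x _; rewrite lee_fin /posp ge_max; apply/andP; split.
    * apply: lerD; apply: ler_wpM2l => //; by rewrite le_max lexx.
    * by apply: addr_ge0; apply: mulr_ge0 => //; rewrite le_max lexx orbT.
- rewrite -lin2 //; [|exact: negp_ge0|exact: negp_ge0|exact: mnegp|exact: mnegp].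
  apply: ge0_le_integral => //.
  + by move=> x _; rewrite lee_fin negp_ge0.
  + exact: mnegp.
  + apply/measurable_EFinP; apply: measurable_funD; apply: measurable_funM;
      (try exact: measurable_cst); apply/measurable_EFinP; exact: mnegp.
  + move=> x _; rewrite lee_fin /negp ge_max; apply/andP; split.
    * rewrite opprD -!mulrN.
      apply: lerD; apply: ler_wpM2l => //; by rewrite le_max lexx.
    * by apply: addr_ge0; apply: mulr_ge0 => //; rewrite le_max lexx orbT.
Qed.

End key.

Section duals.
Context {R : realType} {d : measure_display} {T : measurableType d}.
Local Open Scope ereal_scope.

Lemma dual0 {X : tvsType R} {x' : X -> R} : dual_elt x' -> x' 0%R = 0%R.
Proof.
move=> [lin _]; have h := lin 1%R 0%R 0%R.
rewrite scale1r addr0 mul1r in h.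
have : (x' 0 + x' 0 - x' 0 = x' 0 - x' 0)%R by rewrite -h.
by rewrite addrK subrr.
Qed.

Lemma dualN {X : tvsType R} {x' : X -> R} : dual_elt x' -> forall z, x' (- z)%R = (- x' z)%R.
Proof.
move=> hx z; have h := hx.1 (-1)%R z 0%R.
by rewrite addr0 (dual0 hx) addr0 scaleN1r mulN1r in h.
Qed.

Lemma dual_neg {X : tvsType R} {x' : X -> R} : dual_elt x' -> dual_elt (fun x => - x' x)%R.
Proof.
move=> [lin hc]; split.
- by move=> a u v; rewrite lin opprD mulrN.
- by move=> x; apply: cvgN; exact: hc.
Qed.

Lemma nu_facts {X : tvsType R} {N : set T -> set X} (hN : multimeasure N)
  (hpos : positive_mm N) {x' : X -> R} (hx : dual_elt x') :
  [/\ (fun A => supp x' (N A)) set0 = 0,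
      forall A, measurable A -> 0 <= (fun A => supp x' (N A)) A &
      semi_sigma_additive (fun A => supp x' (N A))].
Proof.
have [h0 [_ [hs _]]] := hN.2 x' hx.
split => //.
- move=> A mA /=.
  have : [set (x' y)%:E | y in N A] (x' 0%R)%:E by exists 0%R => //; exact: hpos.
  by move/ereal_sup_ubound; rewrite (dual0 hx).
- by move=> F mF tF _; exact: hs.
Qed.

Lemma supp_opp {X : tvsType R} (N : set T -> set X) {x' : X -> R} (hx : dual_elt x') :
  (fun A => supp x' (oppmm N A)) = (fun A => supp (fun x => - x' x)%R (N A)).
Proof.
apply: funext => A; rewrite /supp /oppmm; congr ereal_sup.
apply/seteqP; split.
- move=> _ [y [z Nz <-] <-]; exists z => //; by rewrite (dualN hx).
- move=> _ [z Nz <-]; exists (- z)%R; first by exists z.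
  by rewrite (dualN hx).
Qed.

End duals.

Theorem proposition2p6 (R : realType) (d : measure_display) (T : measurableType d)
  (X : tvsType R) (hX : hausdorff_space X)
  (N : set T -> set X) (hN : multimeasure N) (hpos : positive_mm N)
  (f g : T -> R) (a b : R) (ha : 0 <= a) (hb : 0 <= b)
  (hf : bds_integrable N f) (hg : bds_integrable N g)
  (hfg : bds_integrable N (fun w => a * f w + b * g w)) :
  forall E : set T, measurable E -> forall x' : X -> R, dual_elt x' ->
    (supp x' (bds_integral N (fun w => (a * f w + b * g w)%R) E)
     <= a%:E * supp x' (bds_integral N f E) + b%:E * supp x' (bds_integral N g E))%E.
Proof.
move=> E mE x' hx.
have spec F : bds_integrable N F -> supp x' (bds_integral N F E) = bds_expr N F E x'.
  move=> [_ [_ hex]]; have [M [ccM hM]] := hex E mE.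
  have := epsilon_spec (inhabits set0)
    (fun M => cc M /\ forall x', dual_elt x' -> supp x' M = bds_expr N F E x')
    (ex_intro _ M (conj ccM hM)).
  by move=> [_ ->].
rewrite !spec //.
have [a1 b1 c1] := nu_facts hN hpos hx.
have [a2 b2 c2] : [/\ (fun A => supp x' (oppmm N A)) set0 = 0%E,
      forall A, measurable A -> (0 <= (fun A => supp x' (oppmm N A)) A)%E &
      semi_sigma_additive (fun A => supp x' (oppmm N A))].
  have e A : supp x' (oppmm N A) = supp (fun x => (- x' x)%R) (N A).
    exact: (congr1 (fun F => F A) (supp_opp N hx)).
  case: (nu_facts hN hpos (dual_neg hx)) => u v w; split.
  - by rewrite e.
  - by move=> A mA; rewrite e; exact: v.
  - by rewrite (supp_opp N hx).
rewrite /bds_expr !(int_pos_eq a1 b1 c1) !(int_pos_eq a2 b2 c2).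
apply: key => //; [exact: hf.1|exact: hg.1|exact: hfg.1].
Qed.
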